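(* Let $(N,\langle\cdot,\cdot\rangle,\varphi)$ be a modified $H$-type group (see context) whose metric $\langle\cdot,\cdot\rangle$ is a nilsoliton. Then every trivial central extension of $N$ also admits a nilsoliton; that is, for every finite-dimensional real vector space $\mathfrak m$, the simply connected Lie group $\bar N$ with Lie algebra $\bar{\mathfrak n}=\mathfrak n\oplus\mathfrak m$, bracket $[u+a,w+b]=[u,w]$ ($u,w\in\mathfrak n$, $a,b\in\mathfrak m$), admits a left-invariant pseudo-Riemannian metric with nondegenerate center that is a nilsoliton.
   Context: Let $N$ be a 2-step nilpotent real Lie group with Lie algebra $\mathfrak n$, Lie bracket $[\cdot,\cdot]$ and center $\mathfrak z$, endowed with a left-invariant pseudo-Riemannian metric $\langle\cdot,\cdot\rangle$ for which $\mathfrak z$ is nondegenerate. Put $\mathfrak v=\mathfrak z^\perp$. For $z\in\mathfrak z$ define $j(z)\in\mathrm{End}(\mathfrak v)$ by $\langle [x,y],z\rangle=\langle y,j(z)x\rangle$ for all $x,y\in\mathfrak v$. Given a quadratic form $\varphi$ on $\mathfrak z$, $(N,\langle\cdot,\cdot\rangle,\varphi)$ is a modified $H$-type group if $j(z)^2=-\varphi(z)\,\mathrm{Id}_{\mathfrak v}$ for all $z\in\mathfrak z$. A left-invariant metric on a 2-step nilpotent Lie group with Lie algebra $\mathfrak g$ is a nilsoliton if there is $c\in\mathbb R$ such that $\mathrm{Rc}+c\,\mathrm{Id}_{\mathfrak g}$ is a derivation of $\mathfrak g$, where the Ricci operator $\mathrm{Rc}$ is defined by $\langle\mathrm{Rc}\,u,w\rangle=\mathrm{Ric}(u,w)$.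 *)

(* Defs.v *)
(* A real finite-dimensional Lie algebra of dimension n is
   modelled as the coordinate space 'rV[R]_n (R : realType) with a bracket;
   a left-invariant pseudo-Riemannian metric is a symmetric invertible
   Gram matrix g.  All Riemannian quantities of a left-invariant metric are
   computed algebraically on the Lie algebra (Koszul formula). *)
From HB Require Import structures.
From mathcomp Require Import all_boot all_order all_algebra.
From mathcomp Require Import reals.
Set Implicit Arguments. Unset Strict Implicit. Unset Printing Implicit Defensive.
Import Order.TTheory GRing.Theory Num.Theory.
Local Open Scope ring_scope.

Section LieDefs.
Variable R : realType.
Variable n : nat.
Notation V := 'rV[R]_n.

Definition is_bilinear (br : V -> V -> V) : Prop :=
  (forall (a : R) (x y z : V), br (a *: x + y) z = a *: br x z + br y z) /\
  (forall (a : R) (x y z : V), br x (a *: y + z) = a *: br x y + br x z).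

Definition is_lie_bracket (br : V -> V -> V) : Prop :=
  is_bilinear br /\
  (forall x, br x x = 0) /\
  (forall x y z, br x (br y z) + br y (br z x) + br z (br x y) = 0).

Definition two_step_nilpotent (br : V -> V -> V) : Prop :=
  (forall x y z, br (br x y) z = 0) /\ (exists x y, br x y != 0).

Definition ip (g : 'M[R]_n) (u w : V) : R := (u *m g *m w^T) 0 0.

Definition is_metric (g : 'M[R]_n) : Prop := g^T = g /\ g \in unitmx.

Definition center (br : V -> V -> V) (x : V) : Prop := forall y, br x y = 0.

Definition center_nondegenerate (br : V -> V -> V) (g : 'M[R]_n) : Prop :=
  forall z, center br z -> (forall w, center br w -> ip g z w = 0) -> z = 0.

Definition vpart (br : V -> V -> V) (g : 'M[R]_n) (x : V) : Prop :=
  forall z, center br z -> ip g x z = 0.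

Definition evec (j : 'I_n) : V := delta_mx 0 j.

(* Levi-Civita connection via Koszul formula:
   2 <nabla_x y, z> = <[x,y],z> - <[y,z],x> + <[z,x],y> *)
Definition koszul (br : V -> V -> V) (g : 'M[R]_n) (x y : V) : V :=
  \row_j (ip g (br x y) (evec j) - ip g (br y (evec j)) x
          + ip g (br (evec j) x) y).

Definition nabla (br : V -> V -> V) (g : 'M[R]_n) (x y : V) : V :=
  (2%:R^-1 *: koszul br g x y) *m invmx g.

Definition curv (br : V -> V -> V) (g : 'M[R]_n) (x y z : V) : V :=
  nabla br g x (nabla br g y z) - nabla br g y (nabla br g x z)
  - nabla br g (br x y) z.

Definition ric (br : V -> V -> V) (g : 'M[R]_n) (u w : V) : R :=
  \sum_(i < n) (curv br g (evec i) u w) 0 i.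

(* Ricci operator: <Rc u, w> = Ric(u,w) *)
Definition ricci_op (br : V -> V -> V) (g : 'M[R]_n) (u : V) : V :=
  (\row_j ric br g u (evec j)) *m invmx g.

Definition is_derivation (br : V -> V -> V) (D : V -> V) : Prop :=
  (forall (a : R) (x y : V), D (a *: x + y) = a *: D x + D y) /\
  (forall x y, D (br x y) = br (D x) y + br x (D y)).

Definition nilsoliton (br : V -> V -> V) (g : 'M[R]_n) : Prop :=
  exists c : R, is_derivation br (fun u => ricci_op br g u + c *: u).

(* modified H-type: there is a quadratic form phi on the center such that
   for every central z, the map j(z) : v -> v defined by
   <[x,y],z> = <y, j(z) x> (x,y in v) satisfies j(z)^2 = -phi(z) Id_v.
   j(z) is represented by a matrix J (acting on the right) preserving v;
   its restriction to v is uniquely determined since v is nondegenerate. *)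
Definition modified_H_type (br : V -> V -> V) (g : 'M[R]_n) : Prop :=
  exists Q : 'M[R]_n,
    let phi := fun z : V => (z *m Q *m z^T) 0 0 in
    forall z, center br z ->
      exists J : 'M[R]_n,
        (forall x, vpart br g x -> vpart br g (x *m J)) /\
        (forall x y, vpart br g x -> vpart br g y ->
            ip g (br x y) z = ip g y (x *m J)) /\
        (forall x, vpart br g x -> (x *m J) *m J = - phi z *: x).

End LieDefs.

Definition triv_ext (R : realType) (n k : nat) (br : 'rV[R]_n -> 'rV[R]_n -> 'rV[R]_n)
  (u w : 'rV[R]_(n + k)) : 'rV[R]_(n + k) :=
  row_mx (br (lsubmx u) (lsubmx w)) 0.

(* Main.v *)
Require Import Defs.
From HB Require Import structures.
From mathcomp Require Import all_boot all_order all_algebra.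
From mathcomp Require Import reals.
Import Order.TTheory GRing.Theory Num.Theory.
Local Open Scope ring_scope.

Section Ext.
Variables (R : realType) (n k : nat) (br : 'rV[R]_n -> 'rV[R]_n -> 'rV[R]_n)
  (g : 'M[R]_n).
Hypothesis bil : is_bilinear br.
Hypothesis gm : is_metric g.

Definition G : 'M[R]_(n + k) := block_mx g 0 0 1%:M.
Notation brE := (@triv_ext R n k br).

Lemma br0r x : br x 0 = 0.
Proof.
have H := bil.2 (-1) x 0 0; rewrite !scaleN1r !addNr in H; exact H.
Qed.

Lemma br0l x : br 0 x = 0.
Proof.
have H := bil.1 (-1) 0 0 x; rewrite !scaleN1r !addNr in H; exact H.
Qed.

Lemma ipG u a w b : ip G (row_mx u a) (row_mx w b) = ip g u w + (a *m b^T) 0 0.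
Proof.
rewrite /ip /G tr_row_mx mul_row_block !mulmx0 addr0 add0r mulmx1 mul_row_col.
by rewrite mxE [X in _ + X]mxE.
Qed.

Lemma lbrE x y : lsubmx (brE x y) = br (lsubmx x) (lsubmx y).
Proof. by rewrite /triv_ext row_mxKl. Qed.

Lemma evecL (j : 'I_n) : @evec R _ (lshift k j) = row_mx (@evec R _ j) 0.
Proof. by rewrite /evec delta_mx_lshift. Qed.

Lemma evecR (j : 'I_k) : @evec R _ (rshift n j) = row_mx 0 (delta_mx 0 j).
Proof. by rewrite /evec delta_mx_rshift. Qed.

Lemma ip0r u : ip g u 0 = 0.
Proof. by rewrite /ip trmx0 mulmx0 mxE. Qed.

Lemma ip0l u : ip g 0 u = 0.
Proof. by rewrite /ip !mul0mx mxE. Qed.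

Lemma ipGbr x y w : ip G (brE x y) w = ip g (br (lsubmx x) (lsubmx y)) (lsubmx w).
Proof.
rewrite -[w]hsubmxK /triv_ext ipG row_mxKl mul0mx mxE addr0.
by [].
Qed.

Lemma koszulE x y : koszul brE G x y = row_mx (koszul br g (lsubmx x) (lsubmx y)) 0.
Proof.
rewrite -[LHS]hsubmxK; congr row_mx; apply/rowP => j; rewrite !mxE.
- by rewrite !ipGbr evecL row_mxKl.
- rewrite !ipGbr evecR row_mxKl br0r br0l !ip0l ip0r.
  by rewrite subrr addr0.
Qed.

Lemma GH : G *m block_mx (invmx g) 0 0 (1%:M : 'M[R]_k) = 1%:M.
Proof.
rewrite /G mulmx_block !mulmx0 !mul0mx !addr0 !add0r mulmx1 mulmxV ?gm.2 //.
by rewrite [RHS]scalar_mx_block.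
Qed.

Lemma invG : invmx G = block_mx (invmx g) 0 0 (1%:M : 'M[R]_k).
Proof.
have [uG _] := mulmx1_unit GH.
by rewrite -[RHS](mulKmx uG) GH mulmx1.
Qed.

Lemma mulinvG v : row_mx v (0 : 'rV[R]_k) *m invmx G = row_mx (v *m invmx g) 0.
Proof.
by rewrite invG mul_row_block !mulmx0 !mul0mx !addr0.
Qed.

Lemma nablaE x y : nabla brE G x y = row_mx (nabla br g (lsubmx x) (lsubmx y)) 0.
Proof.
by rewrite /nabla koszulE scale_row_mx scaler0 mulinvG.
Qed.

Lemma curvE x y z : curv brE G x y z =
  row_mx (curv br g (lsubmx x) (lsubmx y) (lsubmx z)) 0.
Proof.
rewrite /curv !nablaE !row_mxKl.
rewrite /triv_ext.
by rewrite !opp_row_mx !add_row_mx !oppr0 !addr0.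
Qed.

Lemma koszul0 x : koszul br g x 0 = 0.
Proof.
apply/rowP => j; rewrite !mxE br0r br0l ip0r ip0l.
by rewrite ip0l subr0 addr0.
Qed.

Lemma curv0 x y : curv br g x y 0 = 0.
Proof.
have N0 : forall a, nabla br g a 0 = 0.
  by move=> a; rewrite /nabla koszul0 scaler0 mul0mx.
by rewrite /curv !N0 subrr subr0.
Qed.

Lemma ricE u w : ric brE G u w = ric br g (lsubmx u) (lsubmx w).
Proof.
rewrite /ric big_split_ord /=.
rewrite [X in _ + X]big1 ?addr0.
  by apply: eq_bigr => i _; rewrite curvE row_mxEl evecL row_mxKl.
by move=> i _; rewrite curvE row_mxEr mxE.
Qed.

Lemma ricci_opE u : ricci_op brE G u = row_mx (ricci_op br g (lsubmx u)) 0.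
Proof.
rewrite /ricci_op -mulinvG; congr (_ *m _).
rewrite -[LHS]hsubmxK; congr row_mx; apply/rowP => j; rewrite !mxE ricE.
- by rewrite evecL row_mxKl.
- rewrite evecR row_mxKl /ric big1 // => i _.
  by rewrite curv0 mxE.
Qed.

End Ext.

Lemma lsub0 (R : realType) m1 m2 : lsubmx (0 : 'M[R]_(1, m1 + m2)) = 0.
Proof. by apply/rowP => j; rewrite !mxE. Qed.

Lemma deriv_transfer (R : realType) (n k : nat) (br : 'rV[R]_n -> 'rV[R]_n -> 'rV[R]_n)
  (c : R) (f : 'rV[R]_(n + k) -> 'rV[R]_(n + k)) (D : 'rV[R]_n -> 'rV[R]_n) :
  (forall u, f u = row_mx (D (lsubmx u)) (c *: rsubmx u)) ->
  is_derivation br D -> is_derivation (@triv_ext R n k br) f.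
Proof.
move=> key [Dlin Dder]; split.
- move=> a x y; rewrite !key.
  have E : a *: x + y = row_mx (a *: lsubmx x + lsubmx y) (a *: rsubmx x + rsubmx y).
    by rewrite -add_row_mx -scale_row_mx !hsubmxK.
  rewrite E row_mxKl row_mxKr Dlin.
  rewrite scale_row_mx add_row_mx; congr row_mx.
  by rewrite scalerDr !scalerA mulrC.
- move=> x y; rewrite !key.
  rewrite /triv_ext !row_mxKl row_mxKr scaler0 Dder.
  by rewrite add_row_mx addr0.
Qed.

Theorem corollary4p12 (R : realType) (n : nat)
  (br : 'rV[R]_n -> 'rV[R]_n -> 'rV[R]_n) (g : 'M[R]_n) :
  is_lie_bracket br -> two_step_nilpotent br ->
  is_metric g -> center_nondegenerate br g ->
  modified_H_type br g -> nilsoliton br g ->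
  forall k : nat,
    exists g' : 'M[R]_(n + k),
      is_metric g' /\ center_nondegenerate (@triv_ext R n k br) g' /\
      nilsoliton (@triv_ext R n k br) g'.
Proof.
move=> [bil _] _ gm cnd _ [c [Dlin Dder]] k.
exists (@G R n k g); split; [|split].
- split; first by rewrite /G tr_block_mx gm.1 !trmx0 trmx1.
  exact: (mulmx1_unit (@GH R n k g gm)).1.
- move=> z zc zo.
  have z1c : center br (lsubmx z).
    move=> y; have := congr1 lsubmx (zc (row_mx y 0)).
    by rewrite lbrE row_mxKl lsub0.
  have l0 : lsubmx z = 0.
    apply: cnd => // w wc.
    have H := zo (row_mx w 0) _.
    rewrite -[z]hsubmxK ipG trmx0 mulmx0 mxE addr0 in H; apply: H.
    by move=> y; rewrite /triv_ext row_mxKl wc row_mx0.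
  have r0 : rsubmx z = 0.
    apply/rowP => j; have H := zo (row_mx 0 (delta_mx 0 j)) _.
    rewrite -[z]hsubmxK ipG ip0r add0r trmx_delta -colE mxE in H.
    rewrite [RHS]mxE; apply: H.
    by move=> y; rewrite /triv_ext row_mxKl br0l ?row_mx0.
  by rewrite -[z]hsubmxK l0 r0 row_mx0.
- exists c.
  have key : forall u, ricci_op (triv_ext br) (@G R n k g) u + c *: u =
     row_mx (ricci_op br g (lsubmx u) + c *: lsubmx u) (c *: rsubmx u).
    move=> u; rewrite ricci_opE //.
    have -> : c *: u = row_mx (c *: lsubmx u) (c *: rsubmx u).
      by rewrite -scale_row_mx hsubmxK.
    by rewrite add_row_mx add0r.
  exact: (@deriv_transfer R n k br c _ (fun u => ricci_op br g u + c *: u) key (conj Dlin Dder)).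
Qed.
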